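(* Let $R$ be a lattice diagram of a knot or link. (1) Suppose that two problem crossings of $R$ are adjacent. Then either the two problem crossings have the same crossing type and neither is a bad neighbor of the other, or they have opposite crossing types and each is a bad neighbor of the other. (2) Suppose that four crossings of $R$ are the vertices of a unit square of the $\mathbb{Z}^2$ lattice. If at least two of these four crossings are problem crossings whose two adjacent crossings among the four are among its bad neighbors, then all four crossings are problem crossings and the four crossings form a Celtic configuration. (3) If $R$ has a problem crossing with more than two bad neighbors that are problem crossings, then $R$ has a Celtic configuration.
   Context: A lattice diagram of a knot or link is a knot or link diagram (with over/under information at finitely many transverse double points, the crossings) contained in the $\mathbb{Z}^2$ lattice (vertices the integer points, edges the unit segments parallel to the axes) with all crossings at lattice vertices. At a crossing $c$, the $x$-strand (resp. $y$-strand) is the union of the two horizontal (resp. vertical) lattice edges of $R$ with endpoint $c$; $c$ is an $x$-crossing (resp. $y$-crossing) if the over-strand is the $x$-strand (resp. $y$-strand); this is its crossing type. The crossing graph of $R$ is the subgraph of the $\mathbb{Z}^2$ lattice with a vertex at each crossing of $R$ and an edge between any two crossings at lattice distance $1$; two crossings are adjacent if they are joined by an edge of this graph. Two neighbors $a,b$ of a vertex $v$ in this graph are nearby neighbors of $v$ if the edges $va$ and $vb$ are perpendicular, and opposing neighbors if they are parallel. A crossing $c$ is a problem crossing if it has a pair of nearby neighbors in the crossing graph that both have crossing type opposite to that of $c$; any crossing belonging to such a pair is called a bad neighbor of $c$ (a problem crossing may have more than two bad neighbors). A Celtic configuration is a set of four crossings at the four vertices of a unit square of the $\mathbb{Z}^2$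 lattice such that any two of them joined by a side of the square have opposite crossing types. *)

(* Defs.v *)
From Stdlib Require Import ZArith Arith Lia.
Open Scope Z_scope.

Definition pt : Type := (Z * Z)%type.

(* A lattice diagram: a finite nonempty set of unit lattice edges in which
   every lattice vertex has degree 0, 2 or 4 (degree-4 vertices are the
   crossings, where the horizontal and vertical strands cross transversally),
   together with over/under information at the crossings.
   hE x y : the horizontal edge from (x,y) to (x+1,y) belongs to the diagram.
   vE x y : the vertical edge from (x,y) to (x,y+1) belongs to the diagram.
   xover x y = true : at the crossing (x,y) the x-strand is the over-strand. *)
Definition b2z (b : bool) : Z := if b then 1 else 0.

Record lattice_diagram := {
  hE : Z -> Z -> bool;
  vE : Z -> Z -> bool;
  xover : Z -> Z -> bool;
  bound : Z;
  hE_fin : forall x y, hE x y = true -> Z.abs x <= bound /\ Z.abs y <= bound;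
  vE_fin : forall x y, vE x y = true -> Z.abs x <= bound /\ Z.abs y <= bound;
  deg_ok : forall x y,
    let d := b2z (hE x y) + b2z (hE (x - 1) y) + b2z (vE x y) + b2z (vE x (y - 1)) in
    d = 0 \/ d = 2 \/ d = 4;
  nonempty : exists x y, hE x y = true \/ vE x y = true
}.

Definition deg (R : lattice_diagram) (p : pt) : Z :=
  b2z (hE R (fst p) (snd p)) + b2z (hE R (fst p - 1) (snd p))
  + b2z (vE R (fst p) (snd p)) + b2z (vE R (fst p) (snd p - 1)).

Definition is_crossing (R : lattice_diagram) (p : pt) : Prop := deg R p = 4.

(* crossing type: true = x-crossing, false = y-crossing *)
Definition ctype (R : lattice_diagram) (p : pt) : bool := xover R (fst p) (snd p).

Definition opp_type (R : lattice_diagram) (p q : pt) : Prop := ctype R p <> ctype R q.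

Definition adjacent (R : lattice_diagram) (p q : pt) : Prop :=
  is_crossing R p /\ is_crossing R q /\
  Z.abs (fst p - fst q) + Z.abs (snd p - snd q) = 1.

Definition nearby (R : lattice_diagram) (v a b : pt) : Prop :=
  adjacent R v a /\ adjacent R v b /\
  (fst a - fst v) * (fst b - fst v) + (snd a - snd v) * (snd b - snd v) = 0.

Definition problem (R : lattice_diagram) (c : pt) : Prop :=
  is_crossing R c /\
  exists a b, nearby R c a b /\ opp_type R c a /\ opp_type R c b.

Definition bad_neighbor (R : lattice_diagram) (c a : pt) : Prop :=
  exists b, nearby R c a b /\ opp_type R c a /\ opp_type R c b.

Definition sq (p : pt) (i : nat) : pt :=
  match i with
  | 0%nat => p
  | 1%nat => (fst p + 1, snd p)
  | 2%nat => (fst p + 1, snd p + 1)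
  | _ => (fst p, snd p + 1)
  end.

Definition nxt (i : nat) : nat := Nat.modulo (i + 1) 4.
Definition prv (i : nat) : nat := Nat.modulo (i + 3) 4.

Definition celtic (R : lattice_diagram) (p : pt) : Prop :=
  (forall i, (i < 4)%nat -> is_crossing R (sq p i)) /\
  (forall i, (i < 4)%nat -> opp_type R (sq p i) (sq p (nxt i))).

Definition good_corner (R : lattice_diagram) (p : pt) (i : nat) : Prop :=
  problem R (sq p i) /\
  bad_neighbor R (sq p i) (sq p (nxt i)) /\
  bad_neighbor R (sq p i) (sq p (prv i)).

(* Main.v *)
Require Import Defs.
From Stdlib Require Import ZArith Arith Lia Bool.
Open Scope Z_scope.

Lemma unit2 dx dy : Z.abs dx + Z.abs dy = 1 ->
  (dx = 1 /\ dy = 0) \/ (dx = -1 /\ dy = 0) \/ (dx = 0 /\ dy = 1) \/ (dx = 0 /\ dy = -1).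
Proof. lia. Qed.

Lemma perp6 ux uy vx vy wx wy : Z.abs ux + Z.abs uy = 1 -> Z.abs vx + Z.abs vy = 1 ->
  Z.abs wx + Z.abs wy = 1 -> ux*vx+uy*vy=0 -> ux*wx+uy*wy=0 \/ vx*wx+vy*wy=0.
Proof.
  intros H1 H2 H3 H4; apply unit2 in H1; apply unit2 in H2; apply unit2 in H3.
  intuition subst; lia.
Qed.

Lemma adj_cases R x y q : adjacent R (x,y) q ->
  q = (x+1,y) \/ q = (x + -1, y) \/ q = (x, y+1) \/ q = (x, y + -1).
Proof.
  destruct q as [a b]; intros [_ [_ H]]; simpl in H.
  assert (E: (a = x+1 /\ b = y) \/ (a = x + -1 /\ b = y) \/ (a = x /\ b = y+1)
           \/ (a = x /\ b = y + -1)) by lia.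
  destruct E as [[-> ->]|[[-> ->]|[[-> ->]|[-> ->]]]];
  [left|right;left|right;right;left|right;right;right]; reflexivity.
Qed.

Lemma celtic_of R p q0 q1 q2 q3 : sq p 0 = q0 -> sq p 1 = q1 -> sq p 2 = q2 -> sq p 3 = q3 ->
  is_crossing R q0 -> is_crossing R q1 -> is_crossing R q2 -> is_crossing R q3 ->
  ctype R q0 <> ctype R q1 -> ctype R q1 <> ctype R q2 -> ctype R q2 <> ctype R q3 ->
  ctype R q3 <> ctype R q0 -> celtic R p.
Proof.
  intros E0 E1 E2 E3; subst. intros.
  split; intros i Hi; destruct i as [|[|[|[|i]]]]; try lia; unfold opp_type; auto.
Qed.

Lemma sqr R x y sx sy : (sx = 1 \/ sx = -1) -> (sy = 1 \/ sy = -1) ->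
  is_crossing R (x,y) -> is_crossing R (x+sx,y) -> is_crossing R (x,y+sy) ->
  is_crossing R (x+sx,y+sy) ->
  ctype R (x,y) <> ctype R (x+sx,y) -> ctype R (x,y) <> ctype R (x,y+sy) ->
  (ctype R (x+sx,y+sy) <> ctype R (x+sx,y) \/ ctype R (x+sx,y+sy) <> ctype R (x,y+sy)) ->
  exists p, celtic R p.
Proof.
  intros Hx Hy Cc Ch Cv Cd T1 T2 T3.
  assert (A1 : ctype R (x+sx,y+sy) <> ctype R (x+sx,y)) by
    (destruct (ctype R (x,y)), (ctype R (x+sx,y)), (ctype R (x,y+sy)), (ctype R (x+sx,y+sy)); intuition congruence).
  assert (A2 : ctype R (x+sx,y+sy) <> ctype R (x,y+sy)) by
    (destruct (ctype R (x,y)), (ctype R (x+sx,y)), (ctype R (x,y+sy)), (ctype R (x+sx,y+sy)); intuition congruence).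
  clear T3.
  destruct Hx as [-> | ->]; destruct Hy as [-> | ->].
  - exists (x,y). eapply (celtic_of R (x,y) (x,y) (x+1,y) (x+1,y+1) (x,y+1));
      try (simpl; f_equal; lia); auto.
  - exists (x,y + -1). eapply (celtic_of R _ (x,y + -1) (x+1,y + -1) (x+1,y) (x,y));
      try (simpl; f_equal; lia); auto.
  - exists (x + -1,y). eapply (celtic_of R _ (x + -1,y) (x,y) (x,y+1) (x + -1,y+1));
      try (simpl; f_equal; lia); auto.
  - exists (x + -1,y + -1). eapply (celtic_of R _ (x + -1,y + -1) (x,y + -1) (x,y) (x + -1,y));
      try (simpl; f_equal; lia); auto.
Qed.

Ltac finT := let E := fresh in intro E;
  match goal with
  | H : opp_type _ _ _ |- _ => apply H; congruence
  end.

Lemma midH R x y s : (s = 1 \/ s = -1) ->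
  is_crossing R (x,y) -> is_crossing R (x+1,y) -> is_crossing R (x + -1,y) ->
  ctype R (x,y) <> ctype R (x+1,y) -> ctype R (x,y) <> ctype R (x + -1,y) ->
  problem R (x,y+s) -> ctype R (x,y) <> ctype R (x,y+s) -> exists p, celtic R p.
Proof.
  intros Hs Cc C1 C2 T1 T2 [Cm [u [v [[Au [Av D]] [Ou Ov]]]]] Tm.
  pose proof (proj1 (proj2 Au)) as Cu. pose proof (proj1 (proj2 Av)) as Cv.
  apply adj_cases in Au; apply adj_cases in Av.
  destruct Au as [->|[->|[->| ->]]]; destruct Av as [->|[->|[->| ->]]]; simpl in D;
  try (exfalso; nia);
  first [ solve [apply (sqr R x y 1 s); auto; right; finT]
        | solve [apply (sqr R x y (-1) s); auto; right; finT] ].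
Qed.

Lemma midV R x y s : (s = 1 \/ s = -1) ->
  is_crossing R (x,y) -> is_crossing R (x,y+1) -> is_crossing R (x,y + -1) ->
  ctype R (x,y) <> ctype R (x,y+1) -> ctype R (x,y) <> ctype R (x,y + -1) ->
  problem R (x+s,y) -> ctype R (x,y) <> ctype R (x+s,y) -> exists p, celtic R p.
Proof.
  intros Hs Cc C1 C2 T1 T2 [Cm [u [v [[Au [Av D]] [Ou Ov]]]]] Tm.
  pose proof (proj1 (proj2 Au)) as Cu. pose proof (proj1 (proj2 Av)) as Cv.
  apply adj_cases in Au; apply adj_cases in Av.
  destruct Au as [->|[->|[->| ->]]]; destruct Av as [->|[->|[->| ->]]]; simpl in D;
  try (exfalso; nia);
  first [ solve [apply (sqr R x y s 1); auto; left; finT]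
        | solve [apply (sqr R x y s (-1)); auto; left; finT] ].
Qed.

Lemma alt (T : nat -> bool) i j : (i < 4)%nat -> (j < 4)%nat -> i <> j ->
  T i <> T (nxt i) -> T i <> T (prv i) -> T j <> T (nxt j) -> T j <> T (prv j) ->
  forall k, (k < 4)%nat -> T k <> T (nxt k) /\ T k <> T (prv k).
Proof.
  intros Hi Hj Hij H1 H2 H3 H4 k Hk.
  destruct i as [|[|[|[|i]]]]; try lia; destruct j as [|[|[|[|j]]]]; try lia;
  destruct k as [|[|[|[|k]]]]; try lia; unfold nxt, prv in *; simpl in *;
  destruct (T 0%nat), (T 1%nat), (T 2%nat), (T 3%nat); intuition congruence.
Qed.

Lemma nxt_lt k : (k < 4)%nat -> (nxt k < 4)%nat.
Proof. intros; unfold nxt; apply Nat.mod_upper_bound; lia. Qed.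
Lemma prv_lt k : (k < 4)%nat -> (prv k < 4)%nat.
Proof. intros; unfold prv; apply Nat.mod_upper_bound; lia. Qed.

Lemma corner_problem R p k : (k < 4)%nat -> (forall i, (i < 4)%nat -> is_crossing R (sq p i)) ->
  ctype R (sq p k) <> ctype R (sq p (nxt k)) -> ctype R (sq p k) <> ctype R (sq p (prv k)) ->
  problem R (sq p k).
Proof.
  intros Hk Hc T1 T2. split; [auto|].
  exists (sq p (nxt k)), (sq p (prv k)).
  split; [|split; assumption].
  unfold nearby, adjacent.
  pose proof (Hc _ Hk). pose proof (Hc _ (nxt_lt _ Hk)). pose proof (Hc _ (prv_lt _ Hk)).
  repeat split; auto; destruct p as [x y];
  destruct k as [|[|[|[|k]]]]; try lia; unfold nxt, prv; simpl; lia.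
Qed.

Theorem lemma3p6 (R : lattice_diagram) :
  (* (1) *)
  (forall a b : pt,
     problem R a -> problem R b -> adjacent R a b ->
     (ctype R a = ctype R b /\ ~ bad_neighbor R a b /\ ~ bad_neighbor R b a)
     \/ (opp_type R a b /\ bad_neighbor R a b /\ bad_neighbor R b a))
  /\
  (* (2) *)
  (forall p : pt,
     (forall i, (i < 4)%nat -> is_crossing R (sq p i)) ->
     (exists i j, (i < 4)%nat /\ (j < 4)%nat /\ i <> j /\
                  good_corner R p i /\ good_corner R p j) ->
     (forall i, (i < 4)%nat -> problem R (sq p i)) /\ celtic R p)
  /\
  (* (3) *)
  ((exists c a1 a2 a3 : pt,
      problem R c /\ a1 <> a2 /\ a1 <> a3 /\ a2 <> a3 /\
      bad_neighbor R c a1 /\ problem R a1 /\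
      bad_neighbor R c a2 /\ problem R a2 /\
      bad_neighbor R c a3 /\ problem R a3) ->
   exists p : pt, celtic R p).
Proof.
  split; [|split].
  - intros a b Pa Pb Aab.
    destruct (bool_dec (ctype R a) (ctype R b)) as [E|E].
    + left. split; [exact E|]. split.
      * intros [w [_ [O _]]]. exact (O E).
      * intros [w [_ [O _]]]. apply O; symmetry; exact E.
    + right. split; [exact E|].
      assert (Aba : adjacent R b a) by
        (destruct Aab as [? [? ?]]; repeat split; auto; lia).
      split.
      * destruct Pa as [_ [u [v [[Au [Av D]] [Ou Ov]]]]].
        destruct (perp6 (fst u - fst a) (snd u - snd a) (fst v - fst a) (snd v - snd a)
                        (fst b - fst a) (snd b - snd a)) as [P|P];
          try (destruct Au as [? [? ?]]; lia); try (destruct Av as [? [? ?]]; lia);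
          try (destruct Aab as [? [? ?]]; lia); try exact D.
        -- exists u. split; [split; [exact Aab|split; [exact Au|nia]]|split; assumption].
        -- exists v. split; [split; [exact Aab|split; [exact Av|nia]]|split; assumption].
      * destruct Pb as [_ [u [v [[Au [Av D]] [Ou Ov]]]]].
        destruct (perp6 (fst u - fst b) (snd u - snd b) (fst v - fst b) (snd v - snd b)
                        (fst a - fst b) (snd a - snd b)) as [P|P];
          try (destruct Au as [? [? ?]]; lia); try (destruct Av as [? [? ?]]; lia);
          try (destruct Aab as [? [? ?]]; lia); try exact D.
        -- exists u. split; [split; [exact Aba|split; [exact Au|nia]]|split; [|assumption]].
           intro F; apply E; symmetry; exact F.
        -- exists v. split; [split; [exact Aba|split; [exact Av|nia]]|split; [|assumption]].
           intro F; apply E; symmetry; exact F.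
  - intros p Hc [i [j [Hi [Hj [Hij [Gi Gj]]]]]].
    destruct Gi as [_ [[b1 [_ [O1 _]]] [b2 [_ [O2 _]]]]].
    destruct Gj as [_ [[b3 [_ [O3 _]]] [b4 [_ [O4 _]]]]].
    pose proof (alt (fun k => ctype R (sq p k)) i j Hi Hj Hij O1 O2 O3 O4) as Alt.
    simpl in Alt. split.
    + intros k Hk. destruct (Alt k Hk). apply corner_problem; auto.
    + split; auto. intros k Hk; apply (Alt k Hk).
  - intros [[x y] [a1 [a2 [a3 [Pc [N12 [N13 [N23 [B1 [P1 [B2 [P2 [B3 P3]]]]]]]]]]]]].
    pose proof (proj1 Pc) as Cc.
    destruct B1 as [w1 [[A1 _] [O1 _]]]. destruct B2 as [w2 [[A2 _] [O2 _]]].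
    destruct B3 as [w3 [[A3 _] [O3 _]]].
    pose proof (proj1 (proj2 A1)) as C1. pose proof (proj1 (proj2 A2)) as C2.
    pose proof (proj1 (proj2 A3)) as C3.
    unfold opp_type in *.
    apply adj_cases in A1; apply adj_cases in A2; apply adj_cases in A3.
    destruct A1 as [->|[->|[->| ->]]]; destruct A2 as [->|[->|[->| ->]]];
    destruct A3 as [->|[->|[->| ->]]]; try congruence;
    first [ solve [apply (midH R x y 1); auto]
          | solve [apply (midH R x y (-1)); auto]
          | solve [apply (midV R x y 1); auto]
          | solve [apply (midV R x y (-1)); auto] ].
Qed.
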